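(* Let $p>0$ and $a_k=k^p$, $k\ge1$. Then $\lim_{N\to\infty}E[U_j^N]=I(\alpha;j)<\infty$ for all $j\ge2$.
   Context: For $N\ge2$, coupon type $k\in\{1,\dots,N\}$ has probability $a_k/\sum_{i=1}^Na_i$; $U_j^N$ is the number of empty album places of the $j$-th collector when the first collector completes her set (each collector passes duplicates to the next one), with $$E[U_j^N]=\sum_{k=1}^N\int_0^\infty a_k e^{-a_k t}\frac{(a_kt)^{j-1}}{(j-1)!}\prod_{i\ne k,\,1\le i\le N}\big(1-e^{-a_i t}\big)\,dt.$$ $x_\alpha:=\inf\{x\in[0,1]:\sum_k x^{a_k}=\infty\}$, $L(x;\alpha;j):=\sum_{k}a_k^j\frac{x^{a_k}}{1-x^{a_k}}$, $F(x;\alpha):=\prod_{k}(1-x^{a_k})$, $I(\alpha;j):=\frac{1}{(j-1)!}\int_0^{x_\alpha}L(x;\alpha;j)F(x;\alpha)|\ln x|^{j-1}\frac{dx}{x}$. *)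

(* Defs.v *)
From Stdlib Require Import Reals Lra Lia ClassicalEpsilon Factorial.
Open Scope R_scope.

(* x^y for x >= 0 and real y, with the convention 0^y = 0 (y > 0). *)
Definition rpow (x y : R) : R := if Rlt_dec 0 x then Rpower x y else 0.

(* Limit of a real sequence (value chosen classically; meaningful when the
   sequence converges). *)
Definition lim_seq (u : nat -> R) : R :=
  epsilon (inhabits 0) (fun l => Un_cv u l).

Definition sum1 (f : nat -> R) (n : nat) : R :=
  match n with O => 0 | S m => sum_f_R0 (fun i => f (S i)) m end.

Fixpoint prod1 (f : nat -> R) (n : nat) : R :=
  match n with O => 1 | S m => prod1 f m * f (S m) end.

Fixpoint prod1_except (f : nat -> R) (k0 : nat) (n : nat) : R :=
  match n with
  | O => 1
  | S m => prod1_except f k0 m * (if Nat.eq_dec (S m) k0 then 1 else f (S m))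
  end.

Definition improper_int_0_inf (f : R -> R) (l : R) : Prop :=
  (forall T, 0 <= T -> inhabited (Riemann_integrable f 0 T)) /\
  (forall eps, 0 < eps -> exists M, 0 <= M /\
     forall T (pr : Riemann_integrable f 0 T), M <= T ->
       Rabs (RiemannInt pr - l) < eps).

Definition improper_int_open (f : R -> R) (a b l : R) : Prop :=
  (forall c d, a < c -> c <= d -> d < b -> inhabited (Riemann_integrable f c d)) /\
  (forall eps, 0 < eps -> exists del, 0 < del /\
     forall c d (pr : Riemann_integrable f c d),
       a < c -> c < a + del -> b - del < d -> d < b -> c <= d ->
       Rabs (RiemannInt pr - l) < eps).

Definition apow (p : R) (k : nat) : R := Rpower (INR k) p.

(* E[U_j^N] = sum_{k=1}^N \int_0^oo a_k e^{-a_k t} (a_k t)^{j-1}/(j-1)!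
                           prod_{i<>k, 1<=i<=N} (1 - e^{-a_i t}) dt ,
   stated relationally: e is this value (each improper integral converges). *)
Definition EU_integrand (a : nat -> R) (N j k : nat) (t : R) : R :=
  a k * exp (- (a k * t)) * (a k * t) ^ (j - 1) / INR (fact (j - 1)) *
  prod1_except (fun i => 1 - exp (- (a i * t))) k N.

Definition is_EU (a : nat -> R) (N j : nat) (e : R) : Prop :=
  exists c : nat -> R,
    (forall k, (1 <= k <= N)%nat -> improper_int_0_inf (EU_integrand a N j k) (c k)) /\
    e = sum1 c N.

(* x_alpha = inf { x in [0,1] : sum_k x^{a_k} = oo } *)
Definition series_diverges (u : nat -> R) : Prop :=
  ~ (exists l, Un_cv (sum1 u) l).

Definition is_x_alpha (a : nat -> R) (xa : R) : Prop :=
  is_lub (fun y => exists x, 0 <= x <= 1 /\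
                     series_diverges (fun k => rpow x (a k)) /\ y = - x) (- xa).

Definition Lfun (a : nat -> R) (j : nat) (x : R) : R :=
  lim_seq (sum1 (fun k => a k ^ j * rpow x (a k) / (1 - rpow x (a k)))).

Definition Ffun (a : nat -> R) (x : R) : R :=
  lim_seq (prod1 (fun k => 1 - rpow x (a k))).

Definition I_integrand (a : nat -> R) (j : nat) (x : R) : R :=
  Lfun a j x * Ffun a x * Rabs (ln x) ^ (j - 1) / INR (fact (j - 1)) / x.

(* Main.v *)
Require Import Defs.
From Stdlib Require Import Reals Lra Lia ClassicalEpsilon Factorial FunctionalExtensionality ZArith.
From Coquelicot Require Import Coquelicot.
Open Scope R_scope.

Lemma sum1_S f n : sum1 f (S n) = sum1 f n + f (S n).
Proof. destruct n; simpl; lra. Qed.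

Lemma sum1_0 f : sum1 f 0 = 0.
Proof. reflexivity. Qed.

Lemma sum1_ext f g n : (forall k, (1 <= k <= n)%nat -> f k = g k) -> sum1 f n = sum1 g n.
Proof.
  induction n; intros H; [reflexivity|].
  rewrite !sum1_S, IHn by (intros; apply H; lia). rewrite H by lia. reflexivity.
Qed.

Lemma sum1_le f g n : (forall k, (1 <= k <= n)%nat -> f k <= g k) -> sum1 f n <= sum1 g n.
Proof.
  induction n; intros H; [simpl; lra|].
  rewrite !sum1_S. pose proof (H (S n) ltac:(lia)). pose proof (IHn ltac:(intros; apply H; lia)). lra.
Qed.

Lemma sum1_scal c f n : sum1 (fun k => c * f k) n = c * sum1 f n.
Proof. induction n; [simpl; ring|]. rewrite !sum1_S, IHn. ring. Qed.

Lemma sum1_plus f g n : sum1 (fun k => f k + g k) n = sum1 f n + sum1 g n.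
Proof. induction n; [simpl; ring|]. rewrite !sum1_S, IHn. ring. Qed.

Lemma sum1_nonneg f n : (forall k, (1 <= k <= n)%nat -> 0 <= f k) -> 0 <= sum1 f n.
Proof. intros H. replace 0 with (sum1 (fun _ => 0) n). apply sum1_le; auto.
  induction n; [reflexivity|]. rewrite sum1_S, IHn; [ring|]. intros; apply H; lia. Qed.

Lemma sum1_mono f n n' : (n <= n')%nat -> (forall k, (1 <= k <= n')%nat -> 0 <= f k) -> sum1 f n <= sum1 f n'.
Proof.
  intros Hn H. induction Hn; [lra|]. rewrite sum1_S. pose proof (H (S m) ltac:(lia)).
  pose proof (IHHn ltac:(intros; apply H; lia)). lra.
Qed.

Lemma prod1_ext f g n : (forall k, (1 <= k <= n)%nat -> f k = g k) -> prod1 f n = prod1 g n.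
Proof.
  induction n; intros H; [reflexivity|]. simpl. rewrite IHn by (intros; apply H; lia). rewrite H by lia. reflexivity.
Qed.

Lemma prod1_pos f n : (forall k, (1 <= k <= n)%nat -> 0 < f k) -> 0 < prod1 f n.
Proof. induction n; intros H; simpl; [lra|]. apply Rmult_lt_0_compat; [apply IHn; intros; apply H; lia| apply H; lia]. Qed.

Lemma prod1_nonneg f n : (forall k, (1 <= k <= n)%nat -> 0 <= f k) -> 0 <= prod1 f n.
Proof. induction n; intros H; simpl; [lra|]. apply Rmult_le_pos; [apply IHn; intros; apply H; lia| apply H; lia]. Qed.

Lemma prod1_le1 f n : (forall k, (1 <= k <= n)%nat -> 0 <= f k <= 1) -> prod1 f n <= 1.
Proof. induction n; intros H; simpl; [lra|].
  pose proof (IHn ltac:(intros; apply H; lia)). pose proof (H (S n) ltac:(lia)).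
  pose proof (prod1_nonneg f n ltac:(intros; apply H; lia)). nra. Qed.

Lemma prod1_le f g n : (forall k, (1 <= k <= n)%nat -> 0 <= f k <= g k) -> prod1 f n <= prod1 g n.
Proof. induction n; intros H; simpl; [lra|].
  pose proof (IHn ltac:(intros; apply H; lia)). pose proof (H (S n) ltac:(lia)).
  pose proof (prod1_nonneg f n ltac:(intros; apply H; lia)). nra. Qed.

Lemma prod1_mono f n n' : (n <= n')%nat -> (forall k, (1 <= k <= n')%nat -> 0 <= f k <= 1) -> prod1 f n' <= prod1 f n.
Proof.
  intros Hn H. induction Hn; [lra|]. simpl. pose proof (H (S m) ltac:(lia)).
  pose proof (IHHn ltac:(intros; apply H; lia)).
  pose proof (prod1_nonneg f m ltac:(intros; apply H; lia)). nra.
Qed.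

Lemma prod1_except_S f k n : prod1_except f k (S n) =
  prod1_except f k n * (if Nat.eq_dec (S n) k then 1 else f (S n)).
Proof. reflexivity. Qed.

Lemma prod1_except_gt f k n : (n < k)%nat -> prod1_except f k n = prod1 f n.
Proof.
  induction n; intros H; [reflexivity|]. rewrite prod1_except_S. rewrite IHn by lia.
  destruct (Nat.eq_dec (S n) k); [lia|reflexivity].
Qed.

Lemma prod1_except_mul f k n : (1 <= k <= n)%nat -> prod1_except f k n * f k = prod1 f n.
Proof.
  induction n; intros H; [lia|]. rewrite prod1_except_S. change (prod1 f (S n)) with (prod1 f n * f (S n)).
  destruct (Nat.eq_dec (S n) k).
  - subst. rewrite prod1_except_gt by lia. ring.
  - rewrite <- IHn by lia. ring.
Qed.

Lemma prod1_except_nonneg f k n : (forall i, (1 <= i <= n)%nat -> 0 <= f i <= 1) -> 0 <= prod1_except f k n <= 1.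
Proof.
  induction n; intros H; [simpl; lra|]. rewrite prod1_except_S.
  pose proof (IHn ltac:(intros; apply H; lia)).
  destruct (Nat.eq_dec (S n) k); [lra|]. pose proof (H (S n) ltac:(lia)). nra.
Qed.

Lemma lim_seq_eq u l : Un_cv u l -> lim_seq u = l.
Proof.
  intros H. unfold lim_seq. apply (UL_sequence u).
  - apply (epsilon_spec (inhabits 0) (fun l => Un_cv u l)). exists l; exact H.
  - exact H.
Qed.

Lemma cv_le_eventually u l c : Un_cv u l -> (exists N0, forall n, (N0 <= n)%nat -> u n <= c) -> l <= c.
Proof.
  intros H [N0 HN]. destruct (Rle_dec l c) as [|Hc]; [auto|]. exfalso.
  destruct (H (l - c)) as [N1 HN1]; [lra|].
  specialize (HN1 (max N0 N1) ltac:(lia)). specialize (HN (max N0 N1) ltac:(lia)).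
  unfold Rdist in HN1. apply Rabs_def2 in HN1. lra.
Qed.

Lemma cv_ge_eventually u l c : Un_cv u l -> (exists N0, forall n, (N0 <= n)%nat -> c <= u n) -> c <= l.
Proof.
  intros H [N0 HN]. destruct (Rle_dec c l) as [|Hc]; [auto|]. exfalso.
  destruct (H (c - l)) as [N1 HN1]; [lra|].
  specialize (HN1 (max N0 N1) ltac:(lia)). specialize (HN (max N0 N1) ltac:(lia)).
  unfold Rdist in HN1. apply Rabs_def2 in HN1. lra.
Qed.

Definition isq (k : nat) : R := / (INR k ^ 2).

Lemma isq_tail N N' : (1 <= N <= N')%nat -> sum1 isq N' - sum1 isq N <= / INR N - / INR N'.
Proof.
  intros [H1 H2]. induction H2; [lra|].
  rewrite sum1_S. replace (isq (S m)) with (/ (INR m + 1)^2) by (unfold isq; rewrite S_INR; reflexivity).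
  rewrite S_INR.
  assert (1 <= INR m) by (apply (le_INR 1); lia).
  assert (1 <= INR N) by (apply (le_INR 1); lia).
  assert (/ (INR m + 1) ^ 2 <= / INR m - / (INR m + 1)).
  { replace (/ INR m - / (INR m + 1)) with (/ (INR m * (INR m + 1))) by (field; lra).
    apply Rinv_le_contravar; nra. }
  lra.
Qed.

Lemma isq_sum N : sum1 isq N <= 2.
Proof.
  destruct N; [simpl; lra|].
  pose proof (isq_tail 1 (S N) ltac:(lia)).
  assert (0 < / INR (S N)) by (apply Rinv_0_lt_compat, lt_0_INR; lia).
  assert (sum1 isq 1 = 1) by (unfold isq; simpl; field).
  replace (INR 1) with 1 in H by reflexivity. rewrite Rinv_1 in H. lra.
Qed.
Lemma apow_ge1 p k : 0 < p -> (1 <= k)%nat -> 1 <= apow p k.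
Proof.
  intros hp hk. unfold apow, Rpower.
  assert (1 <= INR k) by (apply (le_INR 1); lia).
  assert (0 <= ln (INR k)) by (rewrite <- ln_1; apply ln_le; lra).
  pose proof (exp_ineq1_le (p * ln (INR k))). nra.
Qed.

Lemma apow_pos p k : 0 < p -> (1 <= k)%nat -> 0 < apow p k.
Proof. intros h1 h2; pose proof (apow_ge1 p k h1 h2); lra. Qed.

Lemma apow_pow p k n : (1 <= k)%nat -> apow p k ^ n = Rpower (INR k) (p * INR n).
Proof.
  intros hk. unfold apow. rewrite <- Rpower_pow. apply Rpower_mult.
  unfold Rpower. apply exp_pos.
Qed.

Lemma apow_q p k q : 0 < p -> (1 <= k)%nat -> 2 <= p * INR q -> INR k ^ 2 <= apow p k ^ q.
Proof.
  intros hp hk hq. rewrite apow_pow by auto. rewrite <- Rpower_pow by (apply lt_0_INR; lia).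
  apply Rle_Rpower; [apply (le_INR 1); lia|]. simpl. lra.
Qed.

Lemma exp_INR_mult n x : exp (INR n * x) = exp x ^ n.
Proof.
  induction n; [simpl; rewrite Rmult_0_l, exp_0; ring|].
  rewrite S_INR, Rmult_plus_distr_r, exp_plus, IHn, Rmult_1_l. simpl. ring.
Qed.

Lemma exp_pow_bound m s : (1 <= m)%nat -> 0 < s -> exp (- s) * s ^ m <= INR m ^ m.
Proof.
  intros hm hs. assert (Hm : 0 < INR m) by (apply lt_0_INR; lia).
  assert (Hs : s = INR m * (s / INR m)) by (field; lra).
  assert (E : exp s = exp (s / INR m) ^ m) by (rewrite <- exp_INR_mult; f_equal; exact Hs).
  assert (H1 : s / INR m <= exp (s / INR m)) by (pose proof (exp_ineq1_le (s / INR m)); lra).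
  assert (H2 : (s / INR m) ^ m <= exp (s / INR m) ^ m).
  { apply pow_incr. split; [apply Rlt_le, Rdiv_lt_0_compat; lra | exact H1]. }
  assert (H3 : s ^ m = INR m ^ m * (s / INR m) ^ m) by (rewrite <- Rpow_mult_distr; f_equal; exact Hs).
  assert (H4 : exp (- s) * exp s = 1) by (rewrite <- exp_plus; replace (-s + s) with 0 by ring; apply exp_0).
  rewrite H3. rewrite <- E in H2.
  assert (0 < exp (-s)) by apply exp_pos. assert (0 < INR m ^ m) by (apply pow_lt; lra).
  assert (H5 : exp (-s) * INR m ^ m * ((s/INR m)^m) <= exp (-s) * INR m ^ m * exp s).
  { apply Rmult_le_compat_l; [nra| exact H2]. }
  replace (exp (-s) * INR m ^ m * exp s) with (INR m ^ m * (exp (-s) * exp s)) in H5 by ring.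
  rewrite H4 in H5. lra.
Qed.

Definition yk p k t := exp (- (apow p k * t)).
Definition Cm (m : nat) := INR m ^ m.

Lemma Cm_pos m : (1 <= m)%nat -> 0 < Cm m.
Proof. intros; unfold Cm; apply pow_lt, lt_0_INR; lia. Qed.

Lemma yk_bound p q m k t : 0 < p -> 2 <= p * INR q -> (q <= m)%nat -> (1 <= m)%nat ->
  (1 <= k)%nat -> 0 < t -> yk p k t <= Cm m / t ^ m * isq k.
Proof.
  intros hp hq hqm hm hk ht. unfold yk, isq.
  pose proof (apow_ge1 p k hp hk) as Ha.
  pose proof (exp_pow_bound m (apow p k * t) hm ltac:(nra)) as H.
  rewrite Rpow_mult_distr in H.
  pose proof (apow_q p k q hp hk hq) as Hq.
  pose proof (Rle_pow (apow p k) q m Ha hqm) as Hqm.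
  assert (0 < t ^ m) by (apply pow_lt; lra).
  assert (0 < INR k ^ 2) by (apply pow_lt, lt_0_INR; lia).
  assert (0 < exp (- (apow p k * t))) by apply exp_pos.
  assert (Hk : INR k ^ 2 * t ^ m <= apow p k ^ m * t ^ m) by nra.
  apply (Rmult_le_reg_r (INR k ^ 2 * t ^ m)); [nra|].
  replace (Cm m / t ^ m * / INR k ^ 2 * (INR k ^ 2 * t ^ m)) with (Cm m).
  2:{ assert (0 < INR k) by (apply lt_0_INR; lia). field. split; [lra | apply pow_nonzero; lra]. }
  unfold Cm. nra.
Qed.

Lemma Lterm_bound p q m j k t : 0 < p -> 2 <= p * INR q -> (j - 1 + q <= m)%nat -> (1 <= j)%nat ->
  (1 <= m)%nat -> (1 <= k)%nat -> 0 < t ->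
  apow p k ^ j * yk p k t / (1 - yk p k t) <= 2 ^ (m + 1) * Cm m / t ^ (m + 1) * isq k.
Proof.
  intros hp hq hjm hj hm hk ht. unfold isq.
  pose proof (apow_ge1 p k hp hk) as Ha. set (a := apow p k) in *.
  set (h := exp (- (a * t / 2))).
  assert (Hy : yk p k t = h * h).
  { unfold yk, h. rewrite <- exp_plus. f_equal. fold a. field. }
  assert (Hh0 : 0 < h) by apply exp_pos.
  assert (Hh1 : (a * t / 2) * h <= 1 - h).
  { pose proof (exp_ineq1_le (a * t / 2)).
    assert (exp (a * t / 2) * h = 1) by (unfold h; rewrite <- exp_plus; replace (a * t / 2 + - (a * t / 2)) with 0 by ring; apply exp_0).
    nra. }
  assert (Hh2 : h * (a * t / 2) ^ m <= Cm m) by (apply exp_pow_bound; auto; nra).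
  assert (Hs : 0 < a * t / 2 * h) by (apply Rmult_lt_0_compat; nra).
  assert (Hhle1 : h <= 1) by nra.
  assert (Hden : a * t / 2 * h <= 1 - h * h) by nra.
  rewrite Hy.
  assert (Haj : a ^ j = a ^ (j - 1) * a).
  { replace j with (S (j - 1)) at 1 by lia. simpl. ring. }
  assert (step1 : a ^ j * (h * h) / (1 - h * h) <= 2 * a ^ (j - 1) * h / t).
  { apply Rle_trans with (a ^ j * (h * h) / (a * t / 2 * h)).
    - unfold Rdiv. apply Rmult_le_compat_l.
      + apply Rmult_le_pos; [apply pow_le; lra| nra].
      + apply Rinv_le_contravar; auto.
    - right. rewrite Haj. field. split; lra. }
  apply Rle_trans with (1 := step1).
  set (A1 := a ^ (j - 1)). set (Aq := a ^ q). set (Am := a ^ m). set (T := t ^ m). set (K2 := INR k ^ 2).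
  assert (hA1 : 0 < A1) by (apply pow_lt; lra).
  assert (hAq : K2 <= Aq) by (apply apow_q; auto).
  assert (hK2 : 0 < K2) by (apply pow_lt, lt_0_INR; lia).
  assert (hT : 0 < T) by (apply pow_lt; lra).
  assert (hAm : A1 * Aq <= Am).
  { unfold A1, Aq, Am. rewrite <- pow_add. apply Rle_pow; [auto | lia]. }
  assert (hP : 0 < 2 ^ m) by (apply pow_lt; lra).
  assert (Hh3 : h * (Am * T / 2 ^ m) <= Cm m).
  { replace (Am * T / 2 ^ m) with ((a * t / 2) ^ m); auto.
    unfold Am, T. rewrite <- !Rpow_mult_distr. unfold Rdiv. rewrite Rpow_mult_distr.
    rewrite pow_inv. reflexivity. }
  assert (Hc : 2 * A1 * h * T * K2 <= 2 * 2 ^ m * Cm m).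
  { apply Rle_trans with (2 * h * T * Am).
    - assert (A1 * K2 <= Am) by nra.
      assert (0 <= 2 * h * T) by nra. nra.
    - replace (2 * h * T * Am) with (2 * 2 ^ m * (h * (Am * T / 2 ^ m))) by (field; lra). apply Rmult_le_compat_l; [lra | exact Hh3]. }
  replace (2 ^ (m + 1)) with (2 * 2 ^ m) by (rewrite pow_add; simpl; ring).
  replace (t ^ (m + 1)) with (T * t) by (unfold T; rewrite pow_add; simpl; ring).
  apply (Rmult_le_reg_r (T * t * K2)); [apply Rmult_lt_0_compat; [apply Rmult_lt_0_compat|]; lra|].
  replace (2 * 2 ^ m * Cm m / (T * t) * / K2 * (T * t * K2)) with (2 * 2 ^ m * Cm m) by (field; lra).
  replace (2 * A1 * h / t * (T * t * K2)) with (2 * A1 * h * T * K2) by (field; lra). exact Hc.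
Qed.

Definition Good (p : R) (j q m : nat) : Prop :=
  0 < p /\ 2 <= p * INR q /\ (j - 1 + q <= m)%nat /\ (2 <= j)%nat /\ (1 <= q)%nat.

Definition CC (m : nat) : R := 2 ^ (m + 1) * Cm m.

Lemma CC_pos m : (1 <= m)%nat -> 0 < CC m.
Proof. intros; unfold CC; apply Rmult_lt_0_compat; [apply pow_lt; lra| apply Cm_pos; auto]. Qed.

Lemma isq_pos k : (1 <= k)%nat -> 0 < isq k.
Proof. intros; unfold isq; apply Rinv_0_lt_compat, pow_lt, lt_0_INR; lia. Qed.

Lemma yk_bound' p j q m k t : Good p j q m -> (1 <= k)%nat -> 0 < t -> yk p k t <= CC m / t ^ m * isq k.
Proof.
  intros (hp & hq & hjm & hj & hq1) hk ht.
  eapply Rle_trans; [apply (yk_bound p q m); auto; lia|].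
  unfold CC. pose proof (Cm_pos m ltac:(lia)). pose proof (isq_pos k hk).
  assert (0 < t ^ m) by (apply pow_lt; lra).
  assert (1 <= 2 ^ (m + 1)) by (apply pow_R1_Rle; lra).
  unfold Rdiv. apply Rmult_le_compat_r; [lra|]. apply Rmult_le_compat_r; [apply Rlt_le, Rinv_0_lt_compat; lra|].
  nra.
Qed.

Lemma Lterm_bound' p j q m k t : Good p j q m -> (1 <= k)%nat -> 0 < t ->
  apow p k ^ j * yk p k t / (1 - yk p k t) <= CC m / t ^ (m + 1) * isq k.
Proof.
  intros (hp & hq & hjm & hj & hq1) hk ht. unfold CC. apply (Lterm_bound p q); auto; lia.
Qed.

Lemma yk_range p k t : 0 < p -> (1 <= k)%nat -> 0 < t -> 0 < yk p k t < 1.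
Proof.
  intros hp hk ht. unfold yk. split; [apply exp_pos|]. rewrite <- exp_0. apply exp_increasing.
  pose proof (apow_ge1 p k hp hk). nra.
Qed.

Lemma yk_range0 p k t : 0 < p -> (1 <= k)%nat -> 0 <= t -> 0 < yk p k t <= 1.
Proof.
  intros hp hk ht. destruct (Req_dec t 0) as [->|].
  - unfold yk. rewrite Rmult_0_r, Ropp_0, exp_0. lra.
  - pose proof (yk_range p k t hp hk ltac:(lra)). lra.
Qed.

Definition FN p N t := prod1 (fun i => 1 - yk p i t) N.
Definition LN p j N t := sum1 (fun k => apow p k ^ j * yk p k t / (1 - yk p k t)) N.
Definition wj j t := t ^ (j - 1) / INR (fact (j - 1)).

Lemma FN_range p N t : 0 < p -> 0 < t -> 0 < FN p N t <= 1.
Proof.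
  intros hp ht. unfold FN. split.
  - apply prod1_pos. intros k hk. pose proof (yk_range p k t hp ltac:(lia) ht). lra.
  - apply prod1_le1. intros k hk. pose proof (yk_range p k t hp ltac:(lia) ht). lra.
Qed.

Lemma FN_mono p N N' t : 0 < p -> 0 < t -> (N <= N')%nat -> FN p N' t <= FN p N t.
Proof.
  intros hp ht h. unfold FN. apply prod1_mono; auto. intros k hk. pose proof (yk_range p k t hp ltac:(lia) ht). lra.
Qed.

Lemma sum1_diff_le f g N N' : (N <= N')%nat -> (forall k, (N < k <= N')%nat -> f k <= g k) ->
  sum1 f N' - sum1 f N <= sum1 g N' - sum1 g N.
Proof.
  intros h H. induction h; [lra|]. rewrite !sum1_S.
  pose proof (H (S m) ltac:(lia)). pose proof (IHh ltac:(intros; apply H; lia)). lra.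
Qed.

Lemma FN_tail_sum p N N' t : 0 < p -> 0 < t -> (N <= N')%nat ->
  FN p N t - FN p N' t <= sum1 (fun k => yk p k t) N' - sum1 (fun k => yk p k t) N.
Proof.
  intros hp ht h. induction h; [lra|]. rewrite sum1_S. unfold FN in *. simpl prod1.
  pose proof (FN_range p m t hp ht). unfold FN in H.
  pose proof (yk_range p (S m) t hp ltac:(lia) ht). nra.
Qed.

Lemma FN_tail p j q m N N' t : Good p j q m -> 0 < t -> (1 <= N <= N')%nat ->
  FN p N t - FN p N' t <= CC m / t ^ m * (/ INR N - / INR N').
Proof.
  intros G ht hN. pose proof G as (hp & _).
  eapply Rle_trans; [apply FN_tail_sum; auto; lia|].
  eapply Rle_trans.
  - apply (sum1_diff_le _ (fun k => CC m / t ^ m * isq k)); [lia|].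
    intros k hk. apply (yk_bound' p j q m); auto; lia.
  - rewrite !sum1_scal. rewrite <- Rmult_minus_distr_l. apply Rmult_le_compat_l.
    + pose proof (CC_pos m ltac:(destruct G as (_&_&?&?&?); lia)). assert (0 < t ^ m) by (apply pow_lt; lra).
      apply Rlt_le, Rdiv_lt_0_compat; lra.
    + apply isq_tail; auto.
Qed.

Lemma Lterm_nonneg p j k t : 0 < p -> (1 <= k)%nat -> 0 < t -> 0 <= apow p k ^ j * yk p k t / (1 - yk p k t).
Proof.
  intros hp hk ht. pose proof (yk_range p k t hp hk ht). pose proof (apow_pos p k hp hk).
  apply Rlt_le, Rdiv_lt_0_compat; [apply Rmult_lt_0_compat; [apply pow_lt|]|]; lra.
Qed.

Lemma LN_nonneg p j N t : 0 < p -> 0 < t -> 0 <= LN p j N t.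
Proof. intros. apply sum1_nonneg. intros. apply Lterm_nonneg; auto; lia. Qed.

Lemma LN_mono p j N N' t : 0 < p -> 0 < t -> (N <= N')%nat -> LN p j N t <= LN p j N' t.
Proof. intros. apply sum1_mono; auto. intros. apply Lterm_nonneg; auto; lia. Qed.

Lemma LN_bound p j q m N t : Good p j q m -> 0 < t -> LN p j N t <= 2 * (CC m / t ^ (m + 1)).
Proof.
  intros G ht. pose proof G as (hp & _). unfold LN.
  eapply Rle_trans; [apply (sum1_le _ (fun k => CC m / t ^ (m + 1) * isq k))|].
  - intros. apply (Lterm_bound' p j q m); auto; lia.
  - rewrite sum1_scal. pose proof (isq_sum N).
    pose proof (CC_pos m ltac:(destruct G as (_&_&?&?&?); lia)). assert (0 < t ^ (m+1)) by (apply pow_lt; lra).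
    assert (0 < CC m / t ^ (m + 1)) by (apply Rdiv_lt_0_compat; lra). nra.
Qed.

Lemma LN_tail p j q m N N' t : Good p j q m -> 0 < t -> (1 <= N <= N')%nat ->
  LN p j N' t - LN p j N t <= CC m / t ^ (m + 1) * (/ INR N - / INR N').
Proof.
  intros G ht hN. pose proof G as (hp & _). unfold LN.
  eapply Rle_trans.
  - apply (sum1_diff_le _ (fun k => CC m / t ^ (m + 1) * isq k)); [lia|].
    intros k hk. apply (Lterm_bound' p j q m); auto; lia.
  - rewrite !sum1_scal. rewrite <- Rmult_minus_distr_l. apply Rmult_le_compat_l.
    + pose proof (CC_pos m ltac:(destruct G as (_&_&?&?&?); lia)). assert (0 < t ^ (m+1)) by (apply pow_lt; lra).
      apply Rlt_le, Rdiv_lt_0_compat; lra.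
    + apply isq_tail; auto.
Qed.

Definition Finf p t := lim_seq (fun N => FN p N t).
Definition Linf p j t := lim_seq (fun N => LN p j N t).

Lemma Finf_cv p t : 0 < p -> 0 < t -> Un_cv (fun N => FN p N t) (Finf p t).
Proof.
  intros hp ht. unfold Finf.
  destruct (decreasing_cv (fun N => FN p N t)) as [l Hl].
  - intros n. apply FN_mono; auto.
  - exists 0. intros x [n ->]. unfold opp_seq. pose proof (FN_range p n t hp ht). lra.
  - rewrite (lim_seq_eq _ l Hl). exact Hl.
Qed.

Lemma Linf_cv p j q m t : Good p j q m -> 0 < t -> Un_cv (fun N => LN p j N t) (Linf p j t).
Proof.
  intros G ht. pose proof G as (hp & _). unfold Linf.
  destruct (growing_cv (fun N => LN p j N t)) as [l Hl].
  - intros n. apply LN_mono; auto.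
  - exists (2 * (CC m / t ^ (m + 1))). intros x [n ->]. apply (LN_bound p j q m); auto.
  - rewrite (lim_seq_eq _ l Hl). exact Hl.
Qed.

Lemma Finf_props p j q m N t : Good p j q m -> 0 < t -> (1 <= N)%nat ->
  0 <= Finf p t <= FN p N t /\ FN p N t - Finf p t <= CC m / t ^ m * / INR N.
Proof.
  intros G ht hN. pose proof G as (hp & _). pose proof (Finf_cv p t hp ht) as H.
  split; [split|].
  - apply (cv_ge_eventually _ _ 0 H). exists O. intros. pose proof (FN_range p n t hp ht). lra.
  - apply (cv_le_eventually _ _ _ H). exists N. intros. apply FN_mono; auto.
  - assert (FN p N t - CC m / t ^ m * / INR N <= Finf p t); [|lra].
    apply (cv_ge_eventually _ _ _ H). exists N. intros n hn.
    pose proof (FN_tail p j q m N n t G ht ltac:(lia)).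
    assert (0 <= CC m / t ^ m * / INR n).
    { pose proof (CC_pos m ltac:(destruct G as (_&_&?&?&?); lia)). assert (0 < t ^ m) by (apply pow_lt; lra).
      apply Rmult_le_pos; [apply Rlt_le, Rdiv_lt_0_compat; lra|]. apply Rlt_le, Rinv_0_lt_compat, lt_0_INR; lia. }
    nra.
Qed.

Lemma Linf_props p j q m N t : Good p j q m -> 0 < t -> (1 <= N)%nat ->
  LN p j N t <= Linf p j t <= 2 * (CC m / t ^ (m + 1)) /\ Linf p j t - LN p j N t <= CC m / t ^ (m + 1) * / INR N.
Proof.
  intros G ht hN. pose proof G as (hp & _). pose proof (Linf_cv p j q m t G ht) as H.
  split; [split|].
  - apply (cv_ge_eventually _ _ _ H). exists N. intros. apply LN_mono; auto.
  - apply (cv_le_eventually _ _ _ H). exists O. intros. apply (LN_bound p j q m); auto.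
  - assert (Linf p j t <= LN p j N t + CC m / t ^ (m + 1) * / INR N); [|lra].
    apply (cv_le_eventually _ _ _ H). exists N. intros n hn.
    pose proof (LN_tail p j q m N n t G ht ltac:(lia)).
    assert (0 <= CC m / t ^ (m + 1) * / INR n).
    { pose proof (CC_pos m ltac:(destruct G as (_&_&?&?&?); lia)). assert (0 < t ^ (m + 1)) by (apply pow_lt; lra).
      apply Rmult_le_pos; [apply Rlt_le, Rdiv_lt_0_compat; lra|]. apply Rlt_le, Rinv_0_lt_compat, lt_0_INR; lia. }
    nra.
Qed.

Definition gN p j N t := sum1 (fun k => EU_integrand (apow p) N j k t) N.

Lemma fact_ge1 n : 1 <= INR (fact n).
Proof. apply (le_INR 1). pose proof (lt_O_fact n). lia. Qed.

Lemma EU_eq p j N k t : 0 < p -> (1 <= j)%nat -> (1 <= k <= N)%nat -> 0 < t ->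
  EU_integrand (apow p) N j k t = apow p k ^ j * yk p k t / (1 - yk p k t) * FN p N t * wj j t.
Proof.
  intros hp hj hk ht. unfold EU_integrand, wj.
  pose proof (yk_range p k t hp ltac:(lia) ht) as Hy.
  pose proof (prod1_except_mul (fun i => 1 - exp (- (apow p i * t))) k N hk) as E.
  change (prod1 (fun i => 1 - exp (- (apow p i * t))) N) with (FN p N t) in E.
  cbv beta in E.
  change (exp (- (apow p k * t))) with (yk p k t) in *.
  assert (E2 : prod1_except (fun i => 1 - exp (- (apow p i * t))) k N = FN p N t / (1 - yk p k t)).
  { rewrite <- E. field. lra. }
  rewrite E2. pose proof (fact_ge1 (j - 1)).
  replace (apow p k ^ j) with (apow p k * apow p k ^ (j - 1)) by (destruct j; [lia|]; simpl; rewrite Nat.sub_0_r; ring).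
  rewrite Rpow_mult_distr. field. split; lra.
Qed.

Lemma gN_eq p j N t : 0 < p -> (1 <= j)%nat -> 0 < t -> gN p j N t = FN p N t * LN p j N t * wj j t.
Proof.
  intros hp hj ht. unfold gN, LN.
  rewrite (sum1_ext _ (fun k => (FN p N t * wj j t) * (apow p k ^ j * yk p k t / (1 - yk p k t)))).
  - rewrite sum1_scal. ring.
  - intros k hk. rewrite EU_eq by auto. ring.
Qed.

Lemma EU_nonneg p j N k t : 0 < p -> (1 <= k)%nat -> 0 <= t -> 0 <= EU_integrand (apow p) N j k t.
Proof.
  intros hp hk ht. unfold EU_integrand.
  pose proof (apow_pos p k hp hk).
  pose proof (prod1_except_nonneg (fun i => 1 - exp (- (apow p i * t))) k N) as HP.
  assert (0 <= prod1_except (fun i => 1 - exp (- (apow p i * t))) k N).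
  { apply HP. intros i hi. pose proof (yk_range0 p i t hp ltac:(lia) ht). unfold yk in H0. lra. }
  pose proof (fact_ge1 (j - 1)).
  apply Rmult_le_pos; auto. unfold Rdiv. apply Rmult_le_pos; [|apply Rlt_le, Rinv_0_lt_compat; lra].
  apply Rmult_le_pos; [apply Rmult_le_pos; [lra| apply Rlt_le, exp_pos]|]. apply pow_le. nra.
Qed.

Lemma gN_nonneg p j N t : 0 < p -> 0 <= t -> 0 <= gN p j N t.
Proof. intros. apply sum1_nonneg. intros. apply EU_nonneg; auto; lia. Qed.

Lemma gN_0 p j N : (2 <= j)%nat -> gN p j N 0 = 0.
Proof.
  intros hj. unfold gN. rewrite (sum1_ext _ (fun _ => 0)).
  - induction N; [reflexivity|]. rewrite sum1_S.
    clear IHN. induction N; [simpl; ring|]. rewrite sum1_S, IHN. ring.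
  - intros k hk. unfold EU_integrand. rewrite Rmult_0_r. rewrite pow_i by lia. unfold Rdiv. ring.
Qed.

Lemma pow_le1 x n : 0 <= x <= 1 -> x ^ n <= 1.
Proof. intros H. rewrite <- (pow1 n). apply pow_incr. lra. Qed.

Definition PM p M := prod1 (apow p) M.

Lemma FN_poly p M t : 0 < p -> 0 < t -> FN p M t <= PM p M * t ^ M.
Proof.
  intros hp ht. unfold FN, PM.
  replace (prod1 (apow p) M * t ^ M) with (prod1 (fun i => apow p i * t) M).
  - apply prod1_le. intros k hk. pose proof (yk_range p k t hp ltac:(lia) ht). split; [lra|].
    unfold yk. pose proof (exp_ineq1_le (- (apow p k * t))). lra.
  - induction M; [simpl; ring|]. simpl. rewrite IHM. ring.
Qed.

Lemma PM_pos p M : 0 < p -> 0 < PM p M.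
Proof. intros. apply prod1_pos. intros. apply apow_pos; auto; lia. Qed.

Definition KD p m := 2 * CC m * (PM p (m + 1) + 1).

Lemma dom_bound p j q m F L t : Good p j q m -> 0 < t ->
  0 <= F <= FN p (m + 1) t -> 0 <= L <= 2 * (CC m / t ^ (m + 1)) ->
  0 <= F * L * wj j t /\ (t <= 1 -> F * L * wj j t <= KD p m) /\ (1 <= t -> F * L * wj j t <= KD p m / t ^ 2).
Proof.
  intros G ht HF HL. pose proof G as (hp & hq & hjm & hj & hq1).
  pose proof (FN_poly p (m + 1) t hp ht) as HP. pose proof (FN_range p (m + 1) t hp ht) as HF1.
  pose proof (CC_pos m ltac:(lia)) as HC. pose proof (PM_pos p (m + 1) hp) as HPM.
  assert (Htm : 0 < t ^ (m + 1)) by (apply pow_lt; lra).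
  assert (Hw : 0 <= wj j t <= t ^ (j - 1)).
  { unfold wj. pose proof (fact_ge1 (j - 1)). assert (0 <= t ^ (j - 1)) by (apply pow_le; lra).
    split; [apply Rmult_le_pos; [lra| apply Rlt_le, Rinv_0_lt_compat; lra]|].
    unfold Rdiv. rewrite <- (Rmult_1_r (t ^ (j - 1))) at 2. apply Rmult_le_compat_l; [lra|].
    rewrite <- Rinv_1. apply Rinv_le_contravar; lra. }
  assert (H0 : 0 <= F * L) by nra.
  split; [nra|]. split.
  - intros Ht1.
    assert (Hj1 : t ^ (j - 1) <= 1) by (apply pow_le1; lra).
    assert (FL : F * L <= 2 * CC m * PM p (m + 1)).
    { apply Rle_trans with (PM p (m + 1) * t ^ (m + 1) * (2 * (CC m / t ^ (m + 1)))).
      - apply Rmult_le_compat; lra.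
      - right. field. lra. }
    unfold KD. apply Rle_trans with (F * L * 1); [apply Rmult_le_compat_l; lra|]. nra.
  - intros Ht1.
    assert (FL : F * L <= 2 * (CC m / t ^ (m + 1))) by (apply Rle_trans with (1 * L); [apply Rmult_le_compat_r; lra| lra]).
    assert (Hpow : t ^ (j - 1) * t ^ 2 <= t ^ (m + 1)).
    { rewrite <- pow_add. apply Rle_pow; [lra| lia]. }
    assert (Ht2 : 0 < t ^ 2) by (apply pow_lt; lra).
    apply Rle_trans with (2 * (CC m / t ^ (m + 1)) * t ^ (j - 1)); [apply Rmult_le_compat; lra|].
    apply Rle_trans with (2 * CC m / t ^ 2).
    + apply (Rmult_le_reg_r (t ^ (m + 1) * t ^ 2)); [nra|].
      replace (2 * (CC m / t ^ (m + 1)) * t ^ (j - 1) * (t ^ (m + 1) * t ^ 2)) with (2 * CC m * (t ^ (j - 1) * t ^ 2)) by (field; lra).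
      replace (2 * CC m / t ^ 2 * (t ^ (m + 1) * t ^ 2)) with (2 * CC m * t ^ (m + 1)) by (field; lra).
      apply Rmult_le_compat_l; lra.
    + unfold KD, Rdiv. apply Rmult_le_compat_r; [apply Rlt_le, Rinv_0_lt_compat; lra|]. nra.
Qed.

Definition Ginf p j t := Finf p t * Linf p j t * wj j t.

Lemma gN_dom p j q m N t : Good p j q m -> (m + 1 <= N)%nat -> 0 < t ->
  0 <= gN p j N t /\ (t <= 1 -> gN p j N t <= KD p m) /\ (1 <= t -> gN p j N t <= KD p m / t ^ 2).
Proof.
  intros G hN ht. pose proof G as (hp & hq & hjm & hj & hq1).
  rewrite gN_eq by (auto; lia). apply (dom_bound p j q m); auto.
  - pose proof (FN_range p N t hp ht). split; [lra|]. apply FN_mono; auto.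
  - split; [apply LN_nonneg; auto| apply (LN_bound p j q m); auto].
Qed.

Lemma Ginf_dom p j q m t : Good p j q m -> 0 < t ->
  0 <= Ginf p j t /\ (t <= 1 -> Ginf p j t <= KD p m) /\ (1 <= t -> Ginf p j t <= KD p m / t ^ 2).
Proof.
  intros G ht. pose proof G as (hp & hq & hjm & hj & hq1). unfold Ginf.
  destruct (Finf_props p j q m (m + 1) t G ht ltac:(lia)) as [HF _].
  destruct (Linf_props p j q m 1 t G ht ltac:(lia)) as [[HL1 HL2] _].
  pose proof (LN_nonneg p j 1 t hp ht).
  apply (dom_bound p j q m); auto. lra.
Qed.

Definition UB (p : R) (j m : nat) (u v : R) : R := (CC m / u ^ m * (2 * (CC m / u ^ (m + 1))) + CC m / u ^ (m + 1)) * v ^ (j - 1).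

Lemma unif_bound p j q m N u v t : Good p j q m -> (1 <= N)%nat -> 0 < u -> u <= t <= v ->
  Rabs (gN p j N t - Ginf p j t) <= UB p j m u v * / INR N.
Proof.
  intros G hN hu ht. pose proof G as (hp & hq & hjm & hj & hq1).
  assert (ht0 : 0 < t) by lra.
  rewrite gN_eq by (auto; lia). unfold Ginf.
  destruct (Finf_props p j q m N t G ht0 hN) as [[HF0 HF1] HF2].
  destruct (Linf_props p j q m N t G ht0 hN) as [[HL0 HL1] HL2].
  pose proof (FN_range p N t hp ht0). pose proof (LN_nonneg p j N t hp ht0).
  pose proof (CC_pos m ltac:(lia)) as HC.
  assert (HiN : 0 < / INR N) by (apply Rinv_0_lt_compat, lt_0_INR; lia).
  assert (Hw : 0 <= wj j t <= v ^ (j - 1)).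
  { unfold wj. pose proof (fact_ge1 (j - 1)). assert (0 <= t ^ (j - 1)) by (apply pow_le; lra).
    assert (t ^ (j - 1) <= v ^ (j - 1)) by (apply pow_incr; lra).
    split; [apply Rmult_le_pos; [lra| apply Rlt_le, Rinv_0_lt_compat; lra]|].
    unfold Rdiv. apply Rle_trans with (t ^ (j - 1)); [|lra].
    rewrite <- (Rmult_1_r (t ^ (j - 1))) at 2. apply Rmult_le_compat_l; [lra|].
    rewrite <- Rinv_1. apply Rinv_le_contravar; lra. }
  assert (Hum : CC m / t ^ m <= CC m / u ^ m).
  { unfold Rdiv. apply Rmult_le_compat_l; [lra|]. apply Rinv_le_contravar; [apply pow_lt; lra| apply pow_incr; lra]. }
  assert (Hum1 : CC m / t ^ (m + 1) <= CC m / u ^ (m + 1)).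
  { unfold Rdiv. apply Rmult_le_compat_l; [lra|]. apply Rinv_le_contravar; [apply pow_lt; lra| apply pow_incr; lra]. }
  assert (Ht1 : 0 <= CC m / t ^ (m + 1)) by (apply Rlt_le, Rdiv_lt_0_compat; [lra| apply pow_lt; lra]).
  assert (Ht2 : 0 <= CC m / t ^ m) by (apply Rlt_le, Rdiv_lt_0_compat; [lra| apply pow_lt; lra]).
  set (A := FN p N t) in *. set (B := LN p j N t) in *. set (F := Finf p t) in *. set (L := Linf p j t) in *.
  set (W := wj j t) in *.
  replace (A * B * W - F * L * W) with (((A - F) * B + F * (B - L)) * W) by ring.
  rewrite Rabs_mult, (Rabs_right W) by lra.
  assert (E1 : Rabs ((A - F) * B + F * (B - L)) <= (CC m / u ^ m * (2 * (CC m / u ^ (m + 1))) + CC m / u ^ (m + 1)) * / INR N).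
  { eapply Rle_trans; [apply Rabs_triang|].
    assert (X1 : (A - F) * B <= (CC m / u ^ m * / INR N) * (2 * (CC m / u ^ (m + 1)))).
    { apply Rmult_le_compat; try lra. apply Rle_trans with (CC m / t ^ m * / INR N); [lra|].
      apply Rmult_le_compat_r; lra. }
    assert (X2 : F * (L - B) <= CC m / u ^ (m + 1) * / INR N).
    { apply Rle_trans with (1 * (CC m / t ^ (m + 1) * / INR N)).
      - apply Rmult_le_compat; lra.
      - rewrite Rmult_1_l. apply Rmult_le_compat_r; lra. }
    rewrite (Rabs_right ((A - F) * B)) by nra.
    rewrite Rabs_left1 by nra. nra. }
  unfold UB. apply Rle_trans with ((CC m / u ^ m * (2 * (CC m / u ^ (m + 1))) + CC m / u ^ (m + 1)) * / INR N * v ^ (j - 1)).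
  - apply Rmult_le_compat; try lra. apply Rabs_pos.
  - right. ring.
Qed.

Lemma cont_of_pt f x : continuity_pt f x -> continuous f x.
Proof. intros H. apply continuity_pt_filterlim. exact H. Qed.

Lemma pt_of_cont f x : continuous f x -> continuity_pt f x.
Proof. intros H. apply continuity_pt_filterlim. exact H. Qed.

Lemma cont_mult_R (f g : R -> R) x : continuous f x -> continuous g x -> continuous (fun y => f y * g y) x.
Proof. intros. apply (continuous_mult f g); auto. Qed.
Lemma cont_plus_R (f g : R -> R) x : continuous f x -> continuous g x -> continuous (fun y => f y + g y) x.
Proof. intros. apply (continuous_plus f g); auto. Qed.
Lemma cont_prod_except_gen (f : nat -> R -> R) k n t : (forall i, continuous (f i) t) ->
  continuous (fun t => prod1_except (fun i => f i t) k n) t.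
Proof.
  intros H. induction n.
  - apply (continuous_ext (fun _ => 1)); [reflexivity|]. apply continuous_const.
  - apply (continuous_ext (fun x => prod1_except (fun i => f i x) k n * (if Nat.eq_dec (S n) k then 1 else f (S n) x))).
    { intros; reflexivity. }
    destruct (Nat.eq_dec (S n) k).
    + apply (cont_mult_R _ (fun _ => 1)); [exact IHn| apply continuous_const].
    + apply (cont_mult_R _ (f (S n))); [exact IHn| apply H].
Qed.
Lemma cont_prod_except (c : nat -> R) k n t :
  continuous (fun t => prod1_except (fun i => 1 - exp (- (c i * t))) k n) t.
Proof.
  apply (cont_prod_except_gen (fun i t => 1 - exp (- (c i * t)))). intros i.
  apply (ex_derive_continuous (K:=R_AbsRing) (V:=R_NormedModule)). auto_derive. easy.
Qed.

Lemma cont_EU p j N k t : continuous (fun t => EU_integrand (apow p) N j k t) t.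
Proof.
  unfold EU_integrand.
  apply (cont_mult_R (fun t => apow p k * exp (- (apow p k * t)) * (apow p k * t) ^ (j - 1) / INR (fact (j - 1)))
     (fun t => prod1_except (fun i => 1 - exp (- (apow p i * t))) k N)).
  - apply (ex_derive_continuous (K:=R_AbsRing) (V:=R_NormedModule)). auto_derive. easy.
  - apply cont_prod_except.
Qed.

Lemma cont_sum1 (F : nat -> R -> R) n t : (forall k, continuous (F k) t) -> continuous (fun t => sum1 (fun k => F k t) n) t.
Proof.
  intros H. induction n.
  - apply (continuous_ext (fun _ => 0)); [reflexivity|]. apply continuous_const.
  - apply (continuous_ext (fun x => sum1 (fun k => F k x) n + F (S n) x)).
    { intros x. rewrite sum1_S. reflexivity. }
    apply (cont_plus_R _ (F (S n))); auto.
Qed.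

Lemma cont_gN p j N t : continuous (gN p j N) t.
Proof. unfold gN. apply (cont_sum1 (fun k t => EU_integrand (apow p) N j k t)). intros. apply cont_EU. Qed.

Lemma archi_small c eps : 0 <= c -> 0 < eps -> exists N0, (1 <= N0)%nat /\ forall n, (N0 <= n)%nat -> c * / INR n < eps.
Proof.
  intros hc he. destruct (archimed (c / eps)) as [H1 _].
  assert (0 <= c / eps) by (apply Rmult_le_pos; [lra| apply Rlt_le, Rinv_0_lt_compat; lra]).
  assert (0 < IZR (up (c / eps))) by lra.
  exists (S (Z.to_nat (up (c / eps)))). split; [lia|]. intros n hn.
  assert (Hn : IZR (up (c / eps)) < INR n).
  { apply Rlt_le_trans with (INR (S (Z.to_nat (up (c / eps))))).
    - rewrite S_INR, INR_IZR_INZ, Z2Nat.id; [lra|]. apply le_IZR. lra.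
    - apply le_INR; lia. }
  assert (0 < INR n) by lra.
  apply (Rmult_lt_reg_r (INR n)); [lra|]. rewrite Rmult_assoc, Rinv_l by lra.
  apply (Rmult_lt_reg_r (/ eps)); [apply Rinv_0_lt_compat; lra|].
  replace (c * 1 * / eps) with (c / eps) by (unfold Rdiv; ring).
  replace (eps * INR n * / eps) with (INR n) by (field; lra). lra.
Qed.

Lemma cont_Ginf p j q m t0 : Good p j q m -> 0 < t0 -> continuous (Ginf p j) t0.
Proof.
  intros G ht0. pose proof G as (hp & hq & hjm & hj & hq1).
  apply cont_of_pt.
  set (r := mkposreal (t0 / 2) ltac:(lra)).
  apply (CVU_continuity (fun N => gN p j N) (Ginf p j) t0 r).
  - intros eps heps.
    assert (HUB : 0 <= UB p j m (t0 / 2) (3 * t0 / 2)).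
    { unfold UB. pose proof (CC_pos m ltac:(lia)).
      assert (0 < (t0/2) ^ m) by (apply pow_lt; lra). assert (0 < (t0/2) ^ (m+1)) by (apply pow_lt; lra).
      apply Rmult_le_pos; [|apply pow_le; lra].
      assert (0 < CC m / (t0 / 2) ^ m) by (apply Rdiv_lt_0_compat; lra).
      assert (0 < CC m / (t0 / 2) ^ (m+1)) by (apply Rdiv_lt_0_compat; lra). nra. }
    destruct (archi_small _ eps HUB heps) as [N0 [HN0 HN]].
    exists N0. intros n y hn hy. unfold Boule in hy. change (Rabs (y - t0) < t0 / 2) in hy. apply Rabs_def2 in hy.
    rewrite Rabs_minus_sym. eapply Rle_lt_trans; [apply (unif_bound p j q m n (t0/2) (3*t0/2)); auto; try lia; lra|]. apply HN; lia.
  - intros. apply pt_of_cont, cont_gN.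
  - unfold Boule. rewrite Rminus_diag, Rabs_R0. change (0 < t0 / 2). lra.
Qed.

Lemma rpow_exp t y : rpow (exp (- t)) y = exp (- (y * t)).
Proof.
  unfold rpow. destruct (Rlt_dec 0 (exp (- t))) as [_|H].
  - unfold Rpower. rewrite ln_exp. f_equal. ring.
  - exfalso. apply H, exp_pos.
Qed.

Lemma Ffun_exp p t : Ffun (apow p) (exp (- t)) = Finf p t.
Proof.
  unfold Ffun, Finf, FN. f_equal. extensionality N. apply prod1_ext. intros k _.
  rewrite rpow_exp. reflexivity.
Qed.

Lemma Lfun_exp p j t : Lfun (apow p) j (exp (- t)) = Linf p j t.
Proof.
  unfold Lfun, Linf, LN. f_equal. extensionality N. apply sum1_ext. intros k _.
  rewrite rpow_exp. reflexivity.
Qed.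

Definition Gx p j t := I_integrand (apow p) j (exp (- t)) * exp (- t).

Lemma Gx_eq p j t : 0 < t -> Gx p j t = Ginf p j t.
Proof.
  intros ht. unfold Gx, I_integrand, Ginf, wj. rewrite Ffun_exp, Lfun_exp, ln_exp.
  rewrite Rabs_Ropp, Rabs_right by lra. pose proof (exp_pos (- t)). field.
  pose proof (fact_ge1 (j - 1)). lra.
Qed.

Lemma cont_Iint p j q m x : Good p j q m -> 0 < x < 1 -> continuous (I_integrand (apow p) j) x.
Proof.
  intros G hx.
  apply (continuous_ext_loc (I_integrand (apow p) j) (fun y => Ginf p j (- ln y) * / y) x).
  - apply (locally_interval _ x 0 1); simpl; try lra.
    intros y hy0 hy1. simpl in hy0, hy1.
    assert (0 < - ln y) by (assert (ln y < ln 1) by (apply ln_increasing; lra); rewrite ln_1 in *; lra).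
    rewrite <- Gx_eq by auto. unfold Gx. rewrite Ropp_involutive, exp_ln by lra. field. lra.
  - apply (cont_mult_R (fun y => Ginf p j (- ln y)) (fun y => / y)).
    + apply (continuous_comp (fun y => - ln y) (Ginf p j)).
      * apply (ex_derive_continuous (K:=R_AbsRing) (V:=R_NormedModule)). auto_derive. lra.
      * apply (cont_Ginf p j q m); auto.
        assert (ln x < ln 1) by (apply ln_increasing; lra). rewrite ln_1 in H. lra.
    + apply (ex_derive_continuous (K:=R_AbsRing) (V:=R_NormedModule)). auto_derive. lra.
Qed.

Lemma exRInt_cont (f : R -> R) a b : a <= b -> (forall t, a <= t <= b -> continuous f t) -> ex_RInt f a b.
Proof.
  intros hab H. apply (ex_RInt_continuous (V:=R_CompleteNormedModule)). intros z hz.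
  rewrite Rmin_left, Rmax_right in hz by lra. apply H; lra.
Qed.

Lemma RInt_inv_sq K a b : 0 < a <= b -> RInt (fun t => K / t ^ 2) a b = K / a - K / b.
Proof.
  intros hab. apply is_RInt_unique.
  assert (H : is_RInt (fun t => K / t ^ 2) a b (minus ((fun t => - (K / t)) b) ((fun t => - (K / t)) a))).
  { apply (is_RInt_derive (V:=R_CompleteNormedModule) (fun t => - (K / t))).
    - intros x hx. rewrite Rmin_left, Rmax_right in hx by lra.
      auto_derive; [repeat split; lra|]. field. lra.
    - intros x hx. rewrite Rmin_left, Rmax_right in hx by lra.
      apply (ex_derive_continuous (K:=R_AbsRing) (V:=R_NormedModule)). auto_derive. repeat split; try lra. nra. }
  replace (K / a - K / b) with (minus ((fun t => - (K / t)) b) ((fun t => - (K / t)) a)); auto.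
  unfold minus, plus, opp. simpl. ring.
Qed.

Lemma RInt_le_R (f g : R -> R) a b : a <= b -> ex_RInt f a b -> ex_RInt g a b ->
  (forall t, a <= t <= b -> f t <= g t) -> RInt f a b <= RInt g a b.
Proof. intros. apply RInt_le; auto. intros; apply H2; lra. Qed.

Lemma RInt_nonneg_R (f : R -> R) a b : a <= b -> ex_RInt f a b -> (forall t, a <= t <= b -> 0 <= f t) -> 0 <= RInt f a b.
Proof. intros. apply RInt_ge_0; auto. intros; apply H1; lra. Qed.

Lemma RInt_Chasles_R (f : R -> R) a b c : ex_RInt f a b -> ex_RInt f b c -> RInt f a b + RInt f b c = RInt f a c.
Proof. intros H1 H2. pose proof (RInt_Chasles f a b c H1 H2) as H. rewrite <- H. reflexivity. Qed.

Lemma RInt_const_bound (f : R -> R) a b K : a <= b -> ex_RInt f a b -> (forall t, a <= t <= b -> 0 <= f t <= K) ->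
  0 <= RInt f a b <= (b - a) * K.
Proof.
  intros hab hf H. split.
  - apply RInt_nonneg_R; auto. intros; apply H; auto.
  - pose proof (abs_RInt_le_const f a b K hab hf) as X.
    assert (Rabs (RInt f a b) <= (b - a) * K) by (apply X; intros t ht; rewrite Rabs_right by (apply Rle_ge, H; auto); apply H; auto).
    pose proof (Rle_abs (RInt f a b)). lra.
Qed.

Lemma RInt_tail_bound (f : R -> R) K a b : 1 <= a <= b -> (forall t, a <= t <= b -> continuous f t) ->
  (forall t, a <= t <= b -> 0 <= f t <= K / t ^ 2) -> 0 <= RInt f a b <= K / a - K / b.
Proof.
  intros hab hc H. assert (ex_RInt f a b) by (apply exRInt_cont; auto; lra).
  split; [apply RInt_nonneg_R; [lra| exact H0| intros t ht; apply H; auto]|].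
  rewrite <- RInt_inv_sq by lra. apply RInt_le_R; [lra| exact H0| |intros; apply H; auto].
  apply exRInt_cont; [lra|]. intros t ht.
  apply (ex_derive_continuous (K:=R_AbsRing) (V:=R_NormedModule)). auto_derive. repeat split; try lra. nra.
Qed.

Definition Shape (f : R -> R) (K : R) : Prop :=
  (forall t, 0 <= t -> continuous f t) /\
  (forall t, 0 <= t -> 0 <= f t) /\
  (forall t, 0 <= t <= 1 -> f t <= K) /\
  (forall t, 1 <= t -> f t <= K / t ^ 2).

Lemma Shape_K f K : Shape f K -> 0 <= K.
Proof. intros (_ & H1 & H2 & _). pose proof (H1 0 ltac:(lra)). pose proof (H2 0 ltac:(lra)). lra. Qed.

Lemma Shape_tail f K T T' : Shape f K -> 1 <= T <= T' -> 0 <= RInt f T T' <= K / T - K / T'.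
Proof.
  intros (Hc & H0 & H1 & H2) hT. apply RInt_tail_bound; auto.
  - intros; apply Hc; lra.
  - intros t ht. split; [apply H0; lra| apply H2; lra].
Qed.

Lemma Shape_ex f K a b : Shape f K -> 0 <= a <= b -> ex_RInt f a b.
Proof. intros (Hc & _) h. apply exRInt_cont; [lra|]. intros; apply Hc; lra. Qed.

Lemma Shape_head f K T : Shape f K -> 0 <= T <= 1 -> 0 <= RInt f 0 T <= T * K.
Proof.
  intros S hT. pose proof (Shape_ex f K 0 T S ltac:(lra)). destruct S as (Hc & H0 & H1 & H2).
  replace (T * K) with ((T - 0) * K) by ring. apply RInt_const_bound; auto; [lra|].
  intros t ht. split; [apply H0; lra| apply H1; lra].
Qed.

Lemma Shape_mono f K T T' : Shape f K -> 0 <= T <= T' -> RInt f 0 T <= RInt f 0 T'.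
Proof.
  intros S hT. pose proof (Shape_ex f K 0 T S ltac:(lra)). pose proof (Shape_ex f K T T' S ltac:(lra)).
  rewrite <- (RInt_Chasles_R f 0 T T'); auto.
  assert (0 <= RInt f T T'); [|lra].
  destruct S as (Hc & Hp0 & _). apply RInt_nonneg_R; [lra| assumption|]. intros; apply Hp0; lra.
Qed.

Lemma Shape_improper f K : Shape f K ->
  exists l, improper_int_0_inf f l /\ forall T, 1 <= T -> Rabs (l - RInt f 0 T) <= K / T.
Proof.
  intros S. pose proof (Shape_K f K S) as HK.
  set (E := fun y => exists T, 0 <= T /\ y = RInt f 0 T).
  assert (HB : forall T, 0 <= T -> RInt f 0 T <= 2 * K).
  { intros T hT. destruct (Rle_dec T 1).
    - pose proof (Shape_head f K T S ltac:(lra)). nra.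
    - pose proof (Shape_head f K 1 S ltac:(lra)).
      pose proof (Shape_tail f K 1 T S ltac:(lra)).
      rewrite <- (RInt_Chasles_R f 0 1 T) by (apply (Shape_ex f K); auto; lra).
      assert (0 <= K / T) by (apply Rmult_le_pos; [lra| apply Rlt_le, Rinv_0_lt_compat; lra]).
      unfold Rdiv in *. rewrite Rinv_1 in *. lra. }
  destruct (completeness E) as [l Hl].
  - exists (2 * K). intros y [T [hT ->]]. apply HB; auto.
  - exists (RInt f 0 0). exists 0. split; [lra| reflexivity].
  - assert (Hup : forall T, 1 <= T -> RInt f 0 T <= l <= RInt f 0 T + K / T).
    { intros T hT. split.
      - apply Hl. exists T; split; [lra| reflexivity].
      - apply Hl. intros y [T' [hT' ->]].
        destruct (Rle_dec T' T).
        + pose proof (Shape_mono f K T' T S ltac:(lra)).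
          assert (0 <= K / T) by (apply Rmult_le_pos; [lra| apply Rlt_le, Rinv_0_lt_compat; lra]). lra.
        + pose proof (Shape_tail f K T T' S ltac:(lra)).
          rewrite <- (RInt_Chasles_R f 0 T T') by (apply (Shape_ex f K); auto; lra).
          assert (0 <= K / T') by (apply Rmult_le_pos; [lra| apply Rlt_le, Rinv_0_lt_compat; lra]). lra. }
    exists l. split; [split|].
    + intros T hT. constructor. apply ex_RInt_Reals_0. apply (Shape_ex f K); [exact S| lra].
    + intros eps heps. exists (1 + K / eps). split.
      { assert (0 <= K / eps) by (apply Rmult_le_pos; [lra| apply Rlt_le, Rinv_0_lt_compat; lra]). lra. }
      intros T pr hT. rewrite <- RInt_Reals.
      assert (0 <= K / eps) by (apply Rmult_le_pos; [lra| apply Rlt_le, Rinv_0_lt_compat; lra]).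
      pose proof (Hup T ltac:(lra)).
      assert (K / T < eps).
      { apply (Rmult_lt_reg_r T); [lra|]. unfold Rdiv. rewrite Rmult_assoc, Rinv_l by lra.
        assert (K = eps * (K / eps)) by (field; lra). nra. }
      rewrite Rabs_left1 by lra. lra.
    + intros T hT. pose proof (Hup T hT). rewrite Rabs_right by lra. lra.
Qed.

Lemma Shape_EU p j N k : 0 < p -> (2 <= j)%nat -> (1 <= k)%nat ->
  Shape (EU_integrand (apow p) N j k) (apow p k ^ j + Cm (j + 1)).
Proof.
  intros hp hj hk. pose proof (apow_ge1 p k hp hk) as Ha. set (a := apow p k) in *.
  pose proof (Cm_pos (j + 1) ltac:(lia)) as HC.
  assert (Haj : 0 < a ^ j) by (apply pow_lt; lra).
  assert (HB : forall t, 0 <= t -> EU_integrand (apow p) N j k t <= a * exp (- (a * t)) * (a * t) ^ (j - 1)).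
  { intros t ht. unfold EU_integrand. fold a.
    pose proof (prod1_except_nonneg (fun i => 1 - exp (- (apow p i * t))) k N) as HP.
    assert (HP' : 0 <= prod1_except (fun i => 1 - exp (- (apow p i * t))) k N <= 1).
    { apply HP. intros i hi. pose proof (yk_range0 p i t hp ltac:(lia) ht). unfold yk in H. lra. }
    pose proof (fact_ge1 (j - 1)).
    assert (0 <= a * exp (- (a * t)) * (a * t) ^ (j - 1)).
    { apply Rmult_le_pos; [apply Rmult_le_pos; [lra| apply Rlt_le, exp_pos]| apply pow_le; nra]. }
    apply Rle_trans with (a * exp (- (a * t)) * (a * t) ^ (j - 1) / INR (fact (j - 1)) * 1).
    - apply Rmult_le_compat_l; [|lra]. apply Rmult_le_pos; [lra| apply Rlt_le, Rinv_0_lt_compat; lra].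
    - rewrite Rmult_1_r. unfold Rdiv. rewrite <- (Rmult_1_r (a * exp (- (a * t)) * (a * t) ^ (j - 1))) at 2.
      apply Rmult_le_compat_l; [lra|]. rewrite <- Rinv_1. apply Rinv_le_contravar; lra. }
  split; [|split; [|split]].
  - intros. apply cont_EU.
  - intros. apply EU_nonneg; auto.
  - intros t ht. eapply Rle_trans; [apply HB; lra|].
    pose proof (yk_range0 p k t hp hk ltac:(lra)) as Hy. unfold yk in Hy. fold a in Hy.
    assert (H1 : (a * t) ^ (j - 1) <= a ^ (j - 1)) by (apply pow_incr; nra).
    assert (H2 : 0 <= (a * t) ^ (j - 1)) by (apply pow_le; nra).
    assert (H3 : a * a ^ (j - 1) = a ^ j) by (destruct j; [lia|]; simpl; rewrite Nat.sub_0_r; ring).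
    assert (0 < Cm (j + 1)) by auto.
    apply Rle_trans with (a * 1 * a ^ (j - 1)); [|nra].
    apply Rmult_le_compat; [nra| exact H2| |exact H1]. apply Rmult_le_compat_l; lra.
  - intros t ht. eapply Rle_trans; [apply HB; lra|].
    pose proof (exp_pow_bound (j + 1) (a * t) ltac:(lia) ltac:(nra)) as H.
    assert (E : (a * t) ^ (j + 1) = (a * t) ^ (j - 1) * (a * t) ^ 2).
    { rewrite <- pow_add. f_equal. lia. }
    rewrite E in H. fold (Cm (j + 1)) in H.
    assert (Ht2 : 0 < t ^ 2) by (apply pow_lt; lra).
    assert (H2 : 0 <= exp (- (a * t)) * (a * t) ^ (j - 1)) by (apply Rmult_le_pos; [apply Rlt_le, exp_pos| apply pow_le; nra]).
    apply Rle_trans with (Cm (j + 1) / t ^ 2).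
    + apply (Rmult_le_reg_r (a * t ^ 2)); [nra|].
      replace (Cm (j + 1) / t ^ 2 * (a * t ^ 2)) with (Cm (j + 1) * a) by (field; lra).
      replace (a * exp (- (a * t)) * (a * t) ^ (j - 1) * (a * t ^ 2)) with (exp (- (a * t)) * ((a * t) ^ (j - 1) * (a * t) ^ 2)) by ring.
      nra.
    + unfold Rdiv. apply Rmult_le_compat_r; [apply Rlt_le, Rinv_0_lt_compat; lra| lra].
Qed.

Lemma KD_nonneg p j q m : Good p j q m -> 0 <= KD p m.
Proof.
  intros G. pose proof G as (hp & hq & hjm & hj & hq1). unfold KD.
  pose proof (CC_pos m ltac:(lia)). pose proof (PM_pos p (m + 1) hp). nra.
Qed.

Lemma Shape_gN p j q m N : Good p j q m -> (m + 1 <= N)%nat -> Shape (gN p j N) (KD p m).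
Proof.
  intros G hN. pose proof G as (hp & hq & hjm & hj & hq1). pose proof (KD_nonneg p j q m G).
  split; [|split; [|split]].
  - intros. apply cont_gN.
  - intros. apply gN_nonneg; auto.
  - intros t ht. destruct (Req_dec t 0) as [->|].
    + rewrite gN_0 by auto. auto.
    + apply (gN_dom p j q m N t G hN ltac:(lra)). lra.
  - intros t ht. apply (gN_dom p j q m N t G hN ltac:(lra)). lra.
Qed.

Definition cvinf (phi : R -> R) (l : R) : Prop :=
  forall eps, 0 < eps -> exists M, forall T, M <= T -> Rabs (phi T - l) < eps.

Lemma improper_cvinf f l : improper_int_0_inf f l -> cvinf (fun T => RInt f 0 T) l.
Proof.
  intros [H1 H2] eps heps. destruct (H2 eps heps) as [M [hM HM]]. exists M. intros T hT.
  destruct (H1 T ltac:(lra)) as [pr]. rewrite (RInt_Reals f 0 T pr). apply HM; auto.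
Qed.

Lemma cvinf_unique phi l1 l2 : cvinf phi l1 -> cvinf phi l2 -> l1 = l2.
Proof.
  intros H1 H2. destruct (Req_dec l1 l2) as [|Hne]; auto. exfalso.
  set (e := Rabs (l1 - l2) / 2). assert (0 < e) by (unfold e; apply Rdiv_lt_0_compat; [apply Rabs_pos_lt; lra| lra]).
  destruct (H1 e H) as [M1 HM1]. destruct (H2 e H) as [M2 HM2].
  specialize (HM1 (Rmax M1 M2) (Rmax_l _ _)). specialize (HM2 (Rmax M1 M2) (Rmax_r _ _)).
  pose proof (Rabs_triang (phi (Rmax M1 M2) - l2) (l1 - phi (Rmax M1 M2))).
  replace (phi (Rmax M1 M2) - l2 + (l1 - phi (Rmax M1 M2))) with (l1 - l2) in H0 by ring.
  rewrite Rabs_minus_sym in HM1. unfold e in *. lra.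
Qed.

Lemma cvinf_sum (phi : nat -> R -> R) (l : nat -> R) N :
  (forall k, (1 <= k <= N)%nat -> cvinf (phi k) (l k)) -> cvinf (fun T => sum1 (fun k => phi k T) N) (sum1 l N).
Proof.
  induction N; intros H.
  - intros eps heps. exists 0. intros. simpl. rewrite Rminus_0_r, Rabs_R0. auto.
  - intros eps heps. destruct (IHN ltac:(intros; apply H; lia) (eps / 2) ltac:(lra)) as [M1 HM1].
    destruct (H (S N) ltac:(lia) (eps / 2) ltac:(lra)) as [M2 HM2].
    exists (Rmax M1 M2). intros T hT. rewrite !sum1_S.
    specialize (HM1 T (Rle_trans _ _ _ (Rmax_l _ _) hT)). specialize (HM2 T (Rle_trans _ _ _ (Rmax_r _ _) hT)).
    replace (sum1 (fun k => phi k T) N + phi (S N) T - (sum1 l N + l (S N))) with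
      ((sum1 (fun k => phi k T) N - sum1 l N) + (phi (S N) T - l (S N))) by ring.
    eapply Rle_lt_trans; [apply Rabs_triang|]. lra.
Qed.

Lemma RInt_plus_R (f g : R -> R) a b : ex_RInt f a b -> ex_RInt g a b ->
  RInt (fun t => f t + g t) a b = RInt f a b + RInt g a b.
Proof. intros. apply (RInt_plus f g); auto. Qed.

Lemma ex_RInt_plus_R (f g : R -> R) a b : ex_RInt f a b -> ex_RInt g a b -> ex_RInt (fun t => f t + g t) a b.
Proof. intros. apply (ex_RInt_plus f g); auto. Qed.

Lemma ex_RInt_sum1 (F : nat -> R -> R) a b N : (forall k, ex_RInt (F k) a b) ->
  ex_RInt (fun t => sum1 (fun k => F k t) N) a b.
Proof.
  intros H. induction N.
  - apply (ex_RInt_ext (fun _ => 0)); [reflexivity|]. apply ex_RInt_const.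
  - apply (ex_RInt_ext (fun t => sum1 (fun k => F k t) N + F (S N) t)).
    { intros; rewrite sum1_S; reflexivity. }
    apply ex_RInt_plus_R; auto.
Qed.

Lemma RInt_sum1 (F : nat -> R -> R) a b N : (forall k, ex_RInt (F k) a b) ->
  RInt (fun t => sum1 (fun k => F k t) N) a b = sum1 (fun k => RInt (F k) a b) N.
Proof.
  intros H. induction N.
  - change (RInt (fun _ => 0) a b = 0). rewrite RInt_const. unfold scal; simpl. unfold mult; simpl. ring.
  - rewrite sum1_S. rewrite (RInt_ext (fun t => sum1 (fun k => F k t) (S N)) (fun t => sum1 (fun k => F k t) N + F (S N) t) a b).
    + rewrite RInt_plus_R; [rewrite IHN; reflexivity| apply ex_RInt_sum1; auto| apply H].
    + intros; rewrite sum1_S; reflexivity.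
Qed.

Definition IV (f : R -> R) : R := epsilon (inhabits 0) (improper_int_0_inf f).

Lemma IV_spec f : (exists l, improper_int_0_inf f l) -> improper_int_0_inf f (IV f).
Proof. intros H. unfold IV. apply (epsilon_spec (inhabits 0) (improper_int_0_inf f)). exact H. Qed.

Definition EE p j N := sum1 (fun k => IV (EU_integrand (apow p) N j k)) N.

Lemma EE_is_EU p j N : 0 < p -> (2 <= j)%nat -> is_EU (apow p) N j (EE p j N).
Proof.
  intros hp hj. exists (fun k => IV (EU_integrand (apow p) N j k)). split; [|reflexivity].
  intros k hk. apply IV_spec. destruct (Shape_improper _ _ (Shape_EU p j N k hp hj ltac:(lia))) as [l [Hl _]].
  exists l; exact Hl.
Qed.

Lemma EE_bound p j q m N T : Good p j q m -> (m + 1 <= N)%nat -> 1 <= T ->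
  Rabs (EE p j N - RInt (gN p j N) 0 T) <= KD p m / T.
Proof.
  intros G hN hT. pose proof G as (hp & hq & hjm & hj & hq1).
  destruct (Shape_improper _ _ (Shape_gN p j q m N G hN)) as [l [Hl Hb]].
  replace (EE p j N) with l; [apply Hb; auto|].
  apply (cvinf_unique (fun T => RInt (gN p j N) 0 T)); [apply improper_cvinf; auto|].
  assert (HS : cvinf (fun T => sum1 (fun k => RInt (EU_integrand (apow p) N j k) 0 T) N) (EE p j N)).
  { unfold EE. apply cvinf_sum. intros k hk. apply improper_cvinf, IV_spec.
    destruct (Shape_improper _ _ (Shape_EU p j N k hp ltac:(lia) ltac:(lia))) as [l' [Hl' _]]. exists l'; exact Hl'. }
  intros eps heps. destruct (HS eps heps) as [M HM]. exists (Rmax M 0). intros T' hT'.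
  unfold gN. rewrite (RInt_sum1 (fun k => EU_integrand (apow p) N j k)).
  - apply HM. eapply Rle_trans; [apply Rmax_l| exact hT'].
  - intros. apply exRInt_cont; [pose proof (Rmax_r M 0); lra|]. intros; apply cont_EU.
Qed.

Lemma cov p j q m c d : Good p j q m -> 0 < c <= d -> d < 1 ->
  ex_RInt (I_integrand (apow p) j) c d /\
  RInt (I_integrand (apow p) j) c d = RInt (Ginf p j) (- ln d) (- ln c).
Proof.
  intros G hc hd.
  assert (Hex : ex_RInt (I_integrand (apow p) j) c d).
  { apply exRInt_cont; [lra|]. intros t ht. apply (cont_Iint p j q m); auto; lra. }
  split; [exact Hex|].
  assert (Hu : 0 < - ln d) by (assert (ln d < ln 1) by (apply ln_increasing; lra); rewrite ln_1 in *; lra).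
  assert (Huv : - ln d <= - ln c) by (assert (ln c <= ln d) by (apply ln_le; lra); lra).
  pose proof (is_RInt_comp (V:=R_CompleteNormedModule) (I_integrand (apow p) j) (fun t => exp (- t)) (fun t => - exp (- t)) (- ln d) (- ln c)) as H.
  rewrite Rmin_left, Rmax_right in H by lra.
  rewrite !Ropp_involutive, !exp_ln in H by lra.
  assert (H' : is_RInt (fun y => - exp (- y) * I_integrand (apow p) j (exp (- y))) (- ln d) (- ln c) (RInt (I_integrand (apow p) j) d c)).
  { apply H.
    - intros x hx. apply (cont_Iint p j q m); auto. split; [apply exp_pos|].
      rewrite <- exp_0. apply exp_increasing. lra.
    - intros x hx. split.
      + auto_derive; [easy| ring].
      + apply (ex_derive_continuous (K:=R_AbsRing) (V:=R_NormedModule)). auto_derive. easy. }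
  apply is_RInt_opp in H'.
  assert (H2 : is_RInt (Ginf p j) (- ln d) (- ln c) (opp (RInt (I_integrand (apow p) j) d c))).
  { apply (is_RInt_ext (fun x => opp (- exp (- x) * I_integrand (apow p) j (exp (- x))))); [|exact H'].
    intros x hx. rewrite Rmin_left, Rmax_right in hx by lra.
    rewrite <- Gx_eq by lra. unfold Gx, opp; simpl. ring. }
  apply (is_RInt_unique (V:=R_CompleteNormedModule)) in H2. rewrite H2. rewrite <- (opp_RInt_swap _ c d Hex). unfold opp; simpl. change (RInt (I_integrand (apow p) j) c d = - - RInt (I_integrand (apow p) j) c d). apply eq_sym, Ropp_involutive.
Qed.

Lemma RInt_minus_R (f g : R -> R) a b : ex_RInt f a b -> ex_RInt g a b ->
  RInt (fun t => f t - g t) a b = RInt f a b - RInt g a b.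
Proof. intros. apply (RInt_minus f g); auto. Qed.

Lemma ex_RInt_minus_R (f g : R -> R) a b : ex_RInt f a b -> ex_RInt g a b -> ex_RInt (fun t => f t - g t) a b.
Proof. intros. apply (ex_RInt_minus f g); auto. Qed.

Lemma sum_ones_div : series_diverges (fun _ => 1).
Proof.
  intros [l Hl]. destruct (Hl 1 ltac:(lra)) as [N0 HN0].
  assert (E : forall n, sum1 (fun _ => 1) n = INR n).
  { induction n; [reflexivity|]. rewrite sum1_S, IHn, S_INR. ring. }
  destruct (archi_small 1 (/ (Rabs l + 2)) ltac:(lra)) as [N1 [HN1 HN]].
  { apply Rinv_0_lt_compat. pose proof (Rabs_pos l). lra. }
  set (n := max N0 N1). specialize (HN0 n ltac:(unfold n; lia)). specialize (HN n ltac:(unfold n; lia)).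
  unfold Rdist in HN0. rewrite E in HN0.
  assert (0 < INR n) by (apply lt_0_INR; unfold n; lia).
  pose proof (Rabs_pos l).
  assert (Rabs l + 2 < INR n).
  { rewrite Rmult_1_l in HN. apply Rinv_lt_cancel in HN; lra. }
  apply Rabs_def2 in HN0. pose proof (Rle_abs l). lra.
Qed.

Lemma sum_yk_conv p j q m t : Good p j q m -> 0 < t -> exists l, Un_cv (sum1 (fun k => yk p k t)) l.
Proof.
  intros G ht. pose proof G as (hp & hq & hjm & hj & hq1).
  destruct (growing_cv (sum1 (fun k => yk p k t))) as [l Hl].
  - intros n. rewrite sum1_S. pose proof (yk_range p (S n) t hp ltac:(lia) ht). lra.
  - exists (CC m / t ^ m * 2). intros x [n ->].
    eapply Rle_trans; [apply (sum1_le _ (fun k => CC m / t ^ m * isq k))|].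
    + intros. apply (yk_bound' p j q m); auto; lia.
    + rewrite sum1_scal. pose proof (isq_sum n). pose proof (CC_pos m ltac:(lia)).
      assert (0 < t ^ m) by (apply pow_lt; lra).
      apply Rmult_le_compat_l; [apply Rlt_le, Rdiv_lt_0_compat; lra| lra].
  - exists l; exact Hl.
Qed.

Lemma xa_one p j q m xa : Good p j q m -> is_x_alpha (apow p) xa -> xa = 1.
Proof.
  intros G H. pose proof G as (hp & _).
  assert (Hl : is_lub (fun y => exists x, 0 <= x <= 1 /\ series_diverges (fun k => rpow x (apow p k)) /\ y = - x) (-1)).
  { split.
    - intros y [x [hx [hd ->]]]. destruct (Req_dec x 1) as [->|hne]; [lra|]. exfalso. apply hd.
      destruct (Req_dec x 0) as [->|hne0].
      + exists 0. rewrite (functional_extensionality (sum1 (fun k => rpow 0 (apow p k))) (fun _ => 0)).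
        * intros e he. exists O. intros. unfold Rdist. rewrite Rminus_0_r, Rabs_R0. auto.
        * intros n. induction n; [reflexivity|]. rewrite sum1_S, IHn. unfold rpow.
          destruct (Rlt_dec 0 0); [lra| ring].
      + assert (hx' : 0 < x < 1) by lra.
        assert (Ht : 0 < - ln x) by (assert (ln x < ln 1) by (apply ln_increasing; lra); rewrite ln_1 in *; lra).
        destruct (sum_yk_conv p j q m (- ln x) G Ht) as [l Hl]. exists l.
        rewrite (functional_extensionality (sum1 (fun k => rpow x (apow p k))) (sum1 (fun k => yk p k (- ln x)))); auto.
        intros n. apply sum1_ext. intros k _. unfold yk.
        replace x with (exp (- (- ln x))) at 1 by (rewrite Ropp_involutive, exp_ln; lra).
        apply rpow_exp.
    - intros b Hb. apply Hb. exists 1. split; [lra| split; [|ring]].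
      replace (fun k => rpow 1 (apow p k)) with (fun _ : nat => 1); [apply sum_ones_div|].
      extensionality k. unfold rpow. destruct (Rlt_dec 0 1); [|lra]. unfold Rpower. rewrite ln_1, Rmult_0_r, exp_0. reflexivity. }
  pose proof (is_lub_u _ _ _ H Hl). lra.
Qed.

Lemma Ginf_ex p j q m u v : Good p j q m -> 0 < u <= v -> ex_RInt (Ginf p j) u v.
Proof. intros G h. apply exRInt_cont; [lra|]. intros. apply (cont_Ginf p j q m); auto; lra. Qed.

Lemma Ginf_nonneg_int p j q m u v : Good p j q m -> 0 < u <= v -> 0 <= RInt (Ginf p j) u v.
Proof.
  intros G h. apply RInt_nonneg_R; [lra| apply (Ginf_ex p j q m); auto|].
  intros t ht. apply (Ginf_dom p j q m t G ltac:(lra)).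
Qed.

Lemma Phi_main p j q m u v u' v' : Good p j q m -> 0 < u <= 1 -> 1 <= v -> 0 < u' <= v' ->
  RInt (Ginf p j) u' v' <= RInt (Ginf p j) u v + KD p m * u + KD p m / v.
Proof.
  intros G hu hv hu'.
  pose proof (KD_nonneg p j q m G) as HK.
  set (a := Rmin u u'). set (b := Rmax v v').
  assert (ha : 0 < a <= u /\ a <= u') by (unfold a; split; [split|]; [apply Rmin_glb_lt; lra| apply Rmin_l| apply Rmin_r]).
  assert (hb : v <= b /\ v' <= b) by (unfold b; split; [apply Rmax_l| apply Rmax_r]).
  assert (EX : forall x y, 0 < x <= y -> ex_RInt (Ginf p j) x y) by (intros; apply (Ginf_ex p j q m); auto).
  assert (E1 : RInt (Ginf p j) a b = RInt (Ginf p j) a u' + RInt (Ginf p j) u' v' + RInt (Ginf p j) v' b).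
  { rewrite (RInt_Chasles_R _ a u' v') by (apply EX; lra).
    rewrite (RInt_Chasles_R _ a v' b); auto; apply EX; lra. }
  assert (E2 : RInt (Ginf p j) a b = RInt (Ginf p j) a u + RInt (Ginf p j) u v + RInt (Ginf p j) v b).
  { rewrite (RInt_Chasles_R _ a u v) by (apply EX; lra).
    rewrite (RInt_Chasles_R _ a v b); auto; apply EX; lra. }
  pose proof (Ginf_nonneg_int p j q m a u' G ltac:(lra)).
  pose proof (Ginf_nonneg_int p j q m v' b G ltac:(lra)).
  assert (B1 : RInt (Ginf p j) a u <= (u - a) * KD p m).
  { apply RInt_const_bound; [lra| apply EX; lra|]. intros t ht.
    pose proof (Ginf_dom p j q m t G ltac:(lra)) as (X1 & X2 & _). split; auto. apply X2; lra. }
  assert (B2 : RInt (Ginf p j) v b <= KD p m / v - KD p m / b).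
  { apply RInt_tail_bound; [lra| |].
    - intros; apply (cont_Ginf p j q m); auto; lra.
    - intros t ht. pose proof (Ginf_dom p j q m t G ltac:(lra)) as (X1 & _ & X3). split; auto. apply X3; lra. }
  assert (0 <= KD p m / b) by (apply Rmult_le_pos; [lra| apply Rlt_le, Rinv_0_lt_compat; lra]).
  assert ((u - a) * KD p m <= KD p m * u) by nra.
  lra.
Qed.

Lemma I_exists p j q m : Good p j q m -> exists I, forall u v, 0 < u <= 1 -> 1 <= v ->
  RInt (Ginf p j) u v <= I <= RInt (Ginf p j) u v + KD p m * u + KD p m / v.
Proof.
  intros G.
  set (E := fun y => exists u v, 0 < u <= v /\ y = RInt (Ginf p j) u v).
  destruct (completeness E) as [I HI].
  - exists (RInt (Ginf p j) 1 1 + KD p m * 1 + KD p m / 1). intros y [u [v [h ->]]].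
    apply (Phi_main p j q m); auto; lra.
  - exists (RInt (Ginf p j) 1 1). exists 1, 1. split; [lra| reflexivity].
  - exists I. intros u v hu hv. split.
    + apply HI. exists u, v. split; [lra| reflexivity].
    + apply HI. intros y [u' [v' [h ->]]]. apply (Phi_main p j q m); auto.
Qed.

Lemma abs_le_split x y : Rabs x <= y -> - y <= x <= y.
Proof. intros H. unfold Rabs in H. destruct (Rcase_abs x); lra. Qed.

Lemma exists_q p : 0 < p -> exists q, (1 <= q)%nat /\ 2 <= p * INR q.
Proof.
  intros hp. destruct (archi_small 1 (p / 2) ltac:(lra) ltac:(lra)) as [N0 [HN0 HN]].
  exists N0. split; auto. specialize (HN N0 (le_n _)).
  assert (0 < INR N0) by (apply lt_0_INR; lia).
  rewrite Rmult_1_l in HN. apply (Rmult_lt_compat_r (INR N0)) in HN; auto.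
  rewrite Rinv_l in HN by lra. lra.
Qed.

Lemma ln_bound_d d : 1/2 <= d < 1 -> - ln d <= 2 * (1 - d).
Proof.
  intros hd. pose proof (exp_ineq1_le (ln (/ d))). rewrite exp_ln in H by (apply Rinv_0_lt_compat; lra).
  rewrite ln_Rinv in H by lra.
  assert (/ d <= 1 + 2 * (1 - d) ).
  { apply (Rmult_le_reg_r d); [lra|]. rewrite Rinv_l by lra. nra. }
  lra.
Qed.

Theorem mainTheorem12 (p : R) (hp : 0 < p) (j : nat) (hj : (2 <= j)%nat)
  (xa : R) (hxa : is_x_alpha (apow p) xa) :
  exists I : R,
    improper_int_open (I_integrand (apow p) j) 0 xa I /\
    exists E : nat -> R,
      (forall N, (2 <= N)%nat -> is_EU (apow p) N j (E N)) /\
      Un_cv E I.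
Proof.
  destruct (exists_q p hp) as [q [hq1 hq]].
  set (m := (j - 1 + q)%nat).
  assert (G : Good p j q m) by (unfold Good, m; repeat split; auto; lia).
  pose proof (xa_one p j q m xa G hxa). subst xa.
  destruct (I_exists p j q m G) as [I HI].
  pose proof (KD_nonneg p j q m G) as HK. set (K := KD p m) in *.
  exists I. split; [split|].
  - intros c d hc hcd hd. constructor. apply ex_RInt_Reals_0. apply (cov p j q m); auto; lra.
  - intros eps heps.
    set (U := Rmin 1 (eps / (2 * (K + 1)))). set (V := Rmax 1 (2 * (K + 1) / eps)).
    assert (hU : 0 < U) by (unfold U; apply Rmin_glb_lt; [lra| apply Rdiv_lt_0_compat; lra]).
    assert (hV : 1 <= V) by (unfold V; apply Rmax_l).
    exists (Rmin (1/2) (Rmin (U / 2) (exp (- V)))). split.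
    { apply Rmin_glb_lt; [lra| apply Rmin_glb_lt; [lra| apply exp_pos]]. }
    intros c d pr hc0 hcdel hd1 hd2 hcd.
    rewrite Rplus_0_l in hcdel.
    pose proof (Rmin_l (1/2) (Rmin (U / 2) (exp (- V)))).
    pose proof (Rmin_r (1/2) (Rmin (U / 2) (exp (- V)))).
    pose proof (Rmin_l (U / 2) (exp (- V))). pose proof (Rmin_r (U / 2) (exp (- V))).
    set (del := Rmin (1/2) (Rmin (U / 2) (exp (- V)))) in *.
    rewrite <- RInt_Reals. destruct (cov p j q m c d G ltac:(lra) ltac:(lra)) as [_ ->].
    assert (Hu0 : 0 < - ln d) by (assert (ln d < ln 1) by (apply ln_increasing; lra); rewrite ln_1 in *; lra).
    assert (Hu1 : - ln d <= U).
    { pose proof (ln_bound_d d ltac:(lra)). lra. }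
    assert (Hv : V < - ln c).
    { assert (ln c < ln (exp (- V))) by (apply ln_increasing; lra). rewrite ln_exp in H3. lra. }
    assert (HU1 : U <= 1) by (unfold U; apply Rmin_l).
    assert (HU2 : U <= eps / (2 * (K + 1))) by (unfold U; apply Rmin_r).
    assert (HV2 : 2 * (K + 1) / eps <= V) by (unfold V; apply Rmax_r).
    destruct (HI (- ln d) (- ln c) ltac:(lra) ltac:(lra)) as [HI1 HI2].
    assert (T1 : K * - ln d < eps / 2).
    { apply Rle_lt_trans with (K * (eps / (2 * (K + 1)))); [apply Rmult_le_compat_l; lra|].
      apply (Rmult_lt_reg_r (2 * (K + 1))); [lra|]. field_simplify; [|lra]. nra. }
    assert (T2 : K / - ln c < eps / 2).
    { apply Rle_lt_trans with (K * (eps / (2 * (K + 1)))).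
      - unfold Rdiv at 1. apply Rmult_le_compat_l; [lra|].
        apply Rle_trans with (/ V); [apply Rinv_le_contravar; lra|].
        replace (eps / (2 * (K + 1))) with (/ (2 * (K + 1) / eps)) by (field; lra).
        apply Rinv_le_contravar; [apply Rdiv_lt_0_compat; lra| lra].
      - apply (Rmult_lt_reg_r (2 * (K + 1))); [lra|]. field_simplify; [|lra]. nra. }
    unfold K in *. rewrite Rabs_left1 by lra. lra.
  - exists (EE p j). split; [intros; apply EE_is_EU; auto|].
    intros eps heps.
    set (u := Rmin 1 (eps / (8 * (K + 1)))). set (v := Rmax 1 (8 * (K + 1) / eps)).
    assert (hu : 0 < u) by (unfold u; apply Rmin_glb_lt; [lra| apply Rdiv_lt_0_compat; lra]).
    assert (hu1 : u <= 1) by (unfold u; apply Rmin_l).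
    assert (hu2 : u <= eps / (8 * (K + 1))) by (unfold u; apply Rmin_r).
    assert (hv : 1 <= v) by (unfold v; apply Rmax_l).
    assert (hv2 : 8 * (K + 1) / eps <= v) by (unfold v; apply Rmax_r).
    assert (HUB : 0 <= (v - u) * UB p j m u v).
    { apply Rmult_le_pos; [lra|]. unfold UB. pose proof (CC_pos m ltac:(unfold m; lia)).
      assert (0 < u ^ m) by (apply pow_lt; lra). assert (0 < u ^ (m+1)) by (apply pow_lt; lra).
      apply Rmult_le_pos; [|apply pow_le; lra].
      assert (0 < CC m / u ^ m) by (apply Rdiv_lt_0_compat; lra).
      assert (0 < CC m / u ^ (m+1)) by (apply Rdiv_lt_0_compat; lra). nra. }
    destruct (archi_small _ (eps / 4) HUB ltac:(lra)) as [N1 [HN1 HN]].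
    exists (max N1 (m + 1)). intros n hn. unfold Rdist.
    assert (hn1 : (m + 1 <= n)%nat) by lia. assert (hn0 : (1 <= n)%nat) by lia.
    pose proof (EE_bound p j q m n v G hn1 hv) as P1.
    pose proof (Shape_gN p j q m n G hn1) as S.
    assert (C : RInt (gN p j n) 0 v = RInt (gN p j n) 0 u + RInt (gN p j n) u v).
    { symmetry. apply RInt_Chasles_R; apply (Shape_ex _ K); auto; lra. }
    pose proof (Shape_head _ _ u S ltac:(lra)) as P2.
    assert (P3 : Rabs (RInt (gN p j n) u v - RInt (Ginf p j) u v) <= (v - u) * (UB p j m u v * / INR n)).
    { rewrite <- RInt_minus_R; [| apply (Shape_ex _ K); auto; lra| apply (Ginf_ex p j q m); auto; lra].
      apply abs_RInt_le_const; [lra| |].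
      - apply ex_RInt_minus_R; [apply (Shape_ex _ K); auto; lra| apply (Ginf_ex p j q m); auto; lra].
      - intros t ht. apply (unif_bound p j q m); auto; lra. }
    destruct (HI u v ltac:(lra) hv) as [HI1 HI2].
    specialize (HN n ltac:(lia)).
    assert (Q1 : 2 * K * u <= eps / 4).
    { apply Rle_trans with (2 * K * (eps / (8 * (K + 1)))); [apply Rmult_le_compat_l; lra|].
      apply (Rmult_le_reg_r (8 * (K + 1))); [lra|]. field_simplify; [|lra]. nra. }
    assert (Q2 : 2 * (K / v) <= eps / 4).
    { assert (K / v <= K * (eps / (8 * (K + 1)))).
      { unfold Rdiv at 1. apply Rmult_le_compat_l; [lra|].
        replace (eps / (8 * (K + 1))) with (/ (8 * (K + 1) / eps)) by (field; lra).
        apply Rinv_le_contravar; [apply Rdiv_lt_0_compat; lra| lra]. }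
      assert (2 * (K * (eps / (8 * (K + 1)))) <= eps / 4).
      { apply (Rmult_le_reg_r (8 * (K + 1))); [lra|]. field_simplify; [|lra]. nra. }
      lra. }
    rewrite C in P1.
    replace ((v - u) * (UB p j m u v * / INR n)) with ((v - u) * UB p j m u v * / INR n) in P3 by ring.
    apply abs_le_split in P1. apply abs_le_split in P3.
    unfold K in *. apply Rabs_def1; lra.
Qed.
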